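(* Let $I\subset\mathbb{R}$ be an uncountable set. Then the set $\mathrm{NBF}(I)$ of unbounded real-valued functions on $I$ is $2^{\mathrm{card}(I)}$-lineable; that is, there is a vector subspace $V$ of $\mathbb{R}^I$ of dimension $2^{\mathrm{card}(I)}$ such that every nonzero $f\in V$ is unbounded on $I$.
   Context: For a cardinal $\mu$, a set $M$ of functions is called $\mu$-lineable if $M\cup\{0\}$ contains a vector space of dimension $\mu$. *)

(* Defs.v *)
From mathcomp Require Import all_boot all_order all_algebra.
From mathcomp Require Import all_classical all_reals.
Set Implicit Arguments. Unset Strict Implicit. Unset Printing Implicit Defensive.
Import Order.TTheory GRing.Theory Num.Theory.
Local Open Scope ring_scope.
Local Open Scope classical_set_scope.

Definition elt_of (R : realType) (I : set R) : Type := {x : R | I x}.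

Definition NBF (R : realType) (I : set R) : set (elt_of I -> R) :=
  [set f | forall M : R, exists x : elt_of I, M < `|f x|].

Definition lin_comb (R : realType) (T : Type) (J : eqType)
  (b : J -> T -> R) (s : seq J) (c : J -> R) : T -> R :=
  fun x => \sum_(j <- s) c j * b j x.

Definition lin_indep (R : realType) (T : Type) (J : eqType) (b : J -> T -> R) :=
  forall (s : seq J) (c : J -> R), uniq s ->
    lin_comb b s c = (fun _ => 0) -> forall j, j \in s -> c j = 0.

(* M is mu-lineable, with mu = card J: M u {0} contains a vector space of
   dimension card J, namely the linear span of a linearly independent family
   indexed by J (which is then a basis of that space). *)
Definition lineable (R : realType) (T : Type) (M : set (T -> R)) (J : eqType) :=
  exists b : J -> T -> R, lin_indep b /\
    forall (s : seq J) (c : J -> R),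
      lin_comb b s c = (fun _ => 0) \/ M (lin_comb b s c).

(* Main.v *)
Require Import Defs.
From mathcomp Require Import all_boot all_order all_algebra.
From mathcomp Require Import all_classical all_reals.
Set Implicit Arguments. Unset Strict Implicit. Unset Printing Implicit Defensive.
Local Open Scope classical_set_scope.

Section Compar.
Variable T : Type.

Lemma compar (X Y : set T) (t0 : T) :
  (exists h : T -> T, (forall x, X x -> Y (h x)) /\
     (forall x y, X x -> X y -> h x = h y -> x = y)) \/
  (exists h : T -> T, (forall x, Y x -> X (h x)) /\
     (forall x y, Y x -> Y y -> h x = h y -> x = y)).
Proof.
pose P (H : set (T * T)) :=
  [/\ (forall x y, H (x, y) -> X x /\ Y y),
      (forall x y y', H (x, y) -> H (x, y') -> y = y') &
      (forall x x' y, H (x, y) -> H (x', y) -> x = x')].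
have hch : forall F : set (set (T * T)), F `<=` P -> total_on F subset ->
    P (\bigcup_(H in F) H).
  move=> F FP tot; split.
  - by move=> x y [H FH Hxy]; have [h1 _ _] := FP _ FH; exact: h1 _ _ Hxy.
  - move=> x y y' [H FH Hxy] [H' FH' Hxy'].
    have [HH'|H'H] := tot _ _ FH FH'.
      by have [_ h2 _] := FP _ FH'; apply: h2 (HH' _ Hxy) Hxy'.
    by have [_ h2 _] := FP _ FH; apply: h2 Hxy (H'H _ Hxy').
  - move=> x x' y [H FH Hxy] [H' FH' Hxy'].
    have [HH'|H'H] := tot _ _ FH FH'.
      by have [_ _ h3] := FP _ FH'; apply: h3 (HH' _ Hxy) Hxy'.
    by have [_ _ h3] := FP _ FH; apply: h3 Hxy (H'H _ Hxy').
have [A [[PA1 PA2 PA3] Amax]] := Zorn_bigcup hch.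
have [tot|ntot] := pselect (forall x, X x -> exists y, A (x, y)).
  left.
  have [h hP] := @choice T T (fun x y => X x -> A (x, y))
    (fun x => match pselect (X x) with
              | left Xx => let: ex_intro y Ay := tot x Xx in ex_intro _ y (fun _ => Ay)
              | right nX => ex_intro _ t0 (fun Xx => False_ind _ (nX Xx)) end).
  exists h; split.
    by move=> x Xx; have [] := PA1 _ _ (hP x Xx).
  by move=> x y Xx Xy hxy; apply: (PA3 _ _ (h x) (hP x Xx)); rewrite hxy; apply: hP.
right.
have [x0 /not_implyP[Xx0 nx0]] := (existsNP _).2 ntot.
have tot : forall y, Y y -> exists x, A (x, y).
  move=> y Yy; apply: contrapT => ny.
  have nA : ~ A (x0, y) by move=> Ay; apply: nx0; exists y.
  apply: (Amax (A `|` [set (x0, y)])).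
    split; first by move=> p Ap; left.
    by move=> AE; apply: nA; apply: AE; right.
  split.
  - by move=> x z [/PA1|/= E]//; case: E => -> ->.
  - move=> x z z' [Axz|/= E] [Axz'|/= E']; try (case: E => ex ez); try (case: E' => ex' ez').
    + exact: PA2 Axz Axz'.
    + by exfalso; apply: nx0; exists z; rewrite -ex'.
    + by exfalso; apply: nx0; exists z'; rewrite -ex.
    + by rewrite ez ez'.
  - move=> x x' z [Axz|/= E] [Axz'|/= E']; try (case: E => ex ez); try (case: E' => ex' ez').
    + exact: PA3 Axz Axz'.
    + by exfalso; apply: ny; exists x; rewrite -ez'.
    + by exfalso; apply: ny; exists x'; rewrite -ez.
    + by rewrite ex ex'.
have [h hP] := @choice T T (fun y x => Y y -> A (x, y))
  (fun y => match pselect (Y y) with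
            | left Yy => let: ex_intro x Ax := tot y Yy in ex_intro _ x (fun _ => Ax)
            | right nY => ex_intro _ t0 (fun Yy => False_ind _ (nY Yy)) end).
exists h; split.
  by move=> y Yy; have [] := PA1 _ _ (hP y Yy).
by move=> x y Yx Yy hxy; apply: (PA2 (h x) _ _ (hP x Yx)); rewrite hxy; apply: hP.
Qed.
End Compar.

Section Hess.
Variable T : Type.
Local Notation trip := ((T * T) * T)%type.

Definition Dm (G : set trip) : set T :=
  fun a => exists b c, G ((a, b), c) \/ G ((b, a), c).

Definition good (G : set trip) : Prop :=
  [/\ (forall p c c', G (p, c) -> G (p, c') -> c = c'),
      (forall p p' c, G (p, c) -> G (p', c) -> p = p'),
      (forall p c, G (p, c) -> Dm G c) &
      (forall a b, Dm G a -> Dm G b -> exists c, G ((a, b), c))].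

Lemma Dm_sub G H : G `<=` H -> Dm G `<=` Dm H.
Proof. by move=> GH a [b [c [h|h]]]; exists b, c; [left|right]; apply: GH. Qed.

Lemma good_chain (F : set (set trip)) : (forall X, F X -> good X) ->
  total_on F subset -> good (\bigcup_(X in F) X).
Proof.
move=> Fg tot.
have big : forall X Y, F X -> F Y -> exists Z, [/\ F Z, X `<=` Z & Y `<=` Z].
  move=> X Y FX FY; have [XY|YX] := tot _ _ FX FY.
    by exists Y; split.
  by exists X; split.
have DmU : forall a, Dm (\bigcup_(X in F) X) a -> exists X, F X /\ Dm X a.
  move=> a [b [c [[X FX h]|[X FX h]]]]; exists X; split => //; exists b, c.
    by left. by right.
split.
- move=> p c c' [X FX h] [Y FY h']; have [Z [FZ XZ YZ]] := big _ _ FX FY.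
  by have [g1 _ _ _] := Fg _ FZ; apply: g1 (XZ _ h) (YZ _ h').
- move=> p p' c [X FX h] [Y FY h']; have [Z [FZ XZ YZ]] := big _ _ FX FY.
  by have [_ g2 _ _] := Fg _ FZ; apply: g2 (XZ _ h) (YZ _ h').
- move=> p c [X FX h]; have [_ _ g3 _] := Fg _ FX.
  by apply: (Dm_sub _ (g3 _ _ h)); apply: bigcup_sup.
- move=> a b /DmU [X [FX Xa]] /DmU [Y [FY Yb]].
  have [Z [FZ XZ YZ]] := big _ _ FX FY.
  have [_ _ _ g4] := Fg _ FZ.
  have [c Zc] := g4 a b (Dm_sub XZ Xa) (Dm_sub YZ Yb).
  by exists c; exists Z.
Qed.

Lemma good0 : good set0.
Proof. by split => // a b [? [? []]]. Qed.

Lemma hess (e : nat -> T) : injective e -> exists pi : T * T -> T, injective pi.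
Proof.
move=> einj.
pose G0 : set trip := fun t => exists i j, t = ((e i, e j), e (pickle (i, j))).
have DmG0 : forall a, Dm G0 a -> exists i, a = e i.
  move=> a [b [c [[i [j /= [-> _ _]]]|[i [j /= [_ -> _]]]]]]; by eexists.
have eG0 : forall i, Dm G0 (e i).
  by move=> i; exists (e 0), (e (pickle (i, 0))); left; exists i, 0.
have gG0 : good G0.
  split.
  - move=> p c c' [i [j E]] [i' [j' E']]; case: E => E1 E2; case: E' => E3 E4.
    subst; case: E3 => /einj -> /einj ->; by [].
  - move=> p p' c [i [j E]] [i' [j' E']]; case: E => E1 E2; case: E' => E3 E4.
    by subst; move: E4 => /einj/(pcan_inj pickleK_inv) [-> ->].
  - by move=> p c [i [j [_ ->]]]; apply: eG0.
  - move=> a b /DmG0 [i ->] /DmG0 [j ->]; exists (e (pickle (i, j))).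
    by exists i, j.
pose P (X : set trip) := X = set0 \/ (G0 `<=` X /\ good X).
have Pg : forall X, P X -> good X by (move=> X [->|[]]//; apply: good0).
have hch : forall F : set (set trip), F `<=` P -> total_on F subset ->
    P (\bigcup_(X in F) X).
  move=> F FP tot.
  have gU := good_chain (fun X FX => Pg _ (FP _ FX)) tot.
  have [[X FX nX]|all0] := pselect (exists2 X, F X & X <> set0).
    right; split => //; have [X0|[G0X _]] := FP _ FX; first by [].
    by move=> t /G0X Xt; exists X.
  left; apply/seteqP; split => // t [X FX Xt]; apply: all0; exists X => //.
  by move=> X0; rewrite X0 in Xt.
have [A [PA Amax]] := Zorn_bigcup hch.
have [A0|[G0A gA]] := PA.
  exfalso; have PG0 : P G0 by (rewrite /P; right; split).
  apply: (Amax G0 _ PG0).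
  rewrite A0; split => //.
  move=> /(_ ((e 0, e 0), e (pickle (0, 0)))) H; apply: H; by exists 0, 0.
have [A1 A2 A3 A4] := gA.
pose B := Dm A.
have eB : forall i, B (e i) by move=> i; apply: (Dm_sub G0A); apply: eG0.
have Acomp : forall a b c, A ((a, b), c) -> [/\ B a, B b & B c].
  move=> a b c h; split; last exact: A3 h.
    by exists b, c; left.
  by exists a, c; right.
have fex : forall p : T * T, exists c, B p.1 -> B p.2 -> A (p, c).
  move=> [a b]; have [[Ba Bb]|nB] := pselect (B a /\ B b).
    by have [c hc] := A4 a b Ba Bb; exists c.
  by exists (e 0) => Ba Bb; exfalso; apply: nB.
have [f fP] := choice fex.
have fB : forall a b, B a -> B b -> B (f (a, b)).
  by move=> a b Ba Bb; have [] := Acomp _ _ _ (fP (a, b) Ba Bb).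
have finj : forall a b a' b', B a -> B b -> B a' -> B b' ->
    f (a, b) = f (a', b') -> a = a' /\ b = b'.
  move=> a b a' b' Ba Bb Ba' Bb' E.
  have h1 := fP (a, b) Ba Bb; have h2 := fP (a', b') Ba' Bb'.
  rewrite E in h1; have := A2 _ _ _ h1 h2; by case.
have e01 : e 0 <> e 1 by move=> /einj.
have e02 : e 0 <> e 2 by move=> /einj.
have e12 : e 1 <> e 2 by move=> /einj.
have [[h [hB hinj]]|[h [hB hinj]]] := compar B (~` B) (e 0); last first.
  pose j x := if pselect (B x) then f (x, e 0) else f (h x, e 1).
  have jB : forall x, B (j x).
    by move=> x; rewrite /j; case: pselect => Bx; apply: fB => //; apply: hB.
  have jinj : injective j.
    move=> x y; rewrite /j; case: pselect => Bx; case: pselect => By.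
    - by move=> /finj []; try solve [assumption | apply: eB | apply: hB; assumption].
    - move=> /finj []; try solve [assumption | apply: eB | apply: hB; assumption].
      by move=> _ /einj.
    - move=> /finj []; try solve [assumption | apply: eB | apply: hB; assumption].
      by move=> _ /einj.
    - move=> /finj []; try solve [assumption | apply: eB | apply: hB; assumption].
      by move=> /hinj ->.
  exists (fun p => f (j p.1, j p.2)) => -[x y] [x' y'] /= /finj [];
    try solve [apply: jB].
  by move=> /jinj -> /jinj ->.
exfalso.
pose C : set T := fun c => exists2 b, B b & h b = c.
have CB : forall c, C c -> ~ B c by move=> c [b Bb <-]; apply: hB.
have hiex : forall c, exists b, C c -> B b /\ h b = c.
  move=> c; have [[b Bb hb]|nC] := pselect (C c); first by exists b.
  by exists (e 0).
have [hinv hinvP] := choice hiex.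
pose a' x := if pselect (B x) then x else hinv x.
have a'B : forall x, B x \/ C x -> B (a' x).
  move=> x Hx; rewrite /a'; case: pselect => // nB.
  by case: Hx => // Cx; have [] := hinvP x Cx.
have a'C : forall x, C x -> h (a' x) = x.
  move=> x Cx; rewrite /a'; case: pselect => [Bx|nBx].
    by exfalso; apply: CB Cx Bx.
  by have [] := hinvP x Cx.
have a'K : forall x, B x -> a' x = x by move=> x Bx; rewrite /a'; case: pselect.
pose k x y := if pselect (B x) then 0 else if pselect (B y) then 1 else 2.
have kB : forall x y, B (e (k x y)) by move=> x y; apply: eB.
pose nw x y := h (f (f (a' x, a' y), e (k x y))).
pose N x y := [/\ B x \/ C x, B y \/ C y & ~ (B x /\ B y)].
have N1 : forall x y, N x y -> B x \/ C x by move=> x y [].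
have N2 : forall x y, N x y -> B y \/ C y by move=> x y [].
have nwB : forall x y, N x y -> B (f (f (a' x, a' y), e (k x y))).
  move=> x y Nxy.
  exact: fB (fB _ _ (a'B _ (N1 _ _ Nxy)) (a'B _ (N2 _ _ Nxy))) (kB x y).
have nwC : forall x y, N x y -> C (nw x y).
  by move=> x y Nxy; exists (f (f (a' x, a' y), e (k x y))) => //; apply: nwB.
have recov : forall x y, B x \/ C x -> B y \/ C y -> (B x <-> B y) ->
    a' x = a' y -> x = y.
  move=> x y Hx Hy [BxBy ByBx] E.
  have [Bx|nBx] := pselect (B x).
    by have By := BxBy Bx; rewrite -(a'K _ Bx) -(a'K _ By).
  have nBy : ~ B y by move=> /ByBx.
  have Cx : C x by case: Hx.
  have Cy : C y by case: Hy.
  by rewrite -(a'C _ Cx) -(a'C _ Cy) E.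
have nwinj : forall x y x2 y2, N x y -> N x2 y2 -> nw x y = nw x2 y2 ->
    x = x2 /\ y = y2.
  move=> x y x2 y2 Nxy Nxy2 E.
  have {}E := hinj _ _ (nwB _ _ Nxy) (nwB _ _ Nxy2) E.
  have [] := finj _ _ _ _ (fB _ _ (a'B _ (N1 _ _ Nxy)) (a'B _ (N2 _ _ Nxy))) (kB x y)
    (fB _ _ (a'B _ (N1 _ _ Nxy2)) (a'B _ (N2 _ _ Nxy2))) (kB x2 y2) E.
  move=> E1 /einj Ek.
  have [] := finj _ _ _ _ (a'B _ (N1 _ _ Nxy)) (a'B _ (N2 _ _ Nxy))
    (a'B _ (N1 _ _ Nxy2)) (a'B _ (N2 _ _ Nxy2)) E1 => Ex Ey.
  have [Bx_iff By_iff] : (B x <-> B x2) /\ (B y <-> B y2).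
    case: Nxy Nxy2 => h1 h2 n1 [h3 h4 n2]; move: Ek; rewrite /k.
    case: (pselect (B x)); case: (pselect (B x2)); case: (pselect (B y));
      case: (pselect (B y2)) => //; tauto.
  by split; apply: recov => //; [exact: (N1 _ _ Nxy)|exact: (N1 _ _ Nxy2)|exact: (N2 _ _ Nxy)|exact: (N2 _ _ Nxy2)].
pose A' := A `|` [set t | exists x y, N x y /\ t = ((x, y), nw x y)].
have notN : forall x y, B x -> B y -> ~ N x y by move=> x y Bx By [_ _ []].
have DmA'E : forall x, Dm A' x -> B x \/ C x.
  move=> x [y [c [[Axy|[x1 [y1 [N1' E1]]]]|[Ayx|[x1 [y1 [N1' E1]]]]]]].
  - by left; have [] := Acomp _ _ _ Axy.
  - by case: E1 => -> _ _; apply: N1 N1'.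
  - by left; have [] := Acomp _ _ _ Ayx.
  - by case: E1 => _ -> _; apply: N2 N1'.
have AA' : A `<=` A' by move=> t At; left.
have CDm : forall x, C x -> Dm A' x.
  move=> x Cx; exists (e 0), (nw (e 0) x); right; right; exists (e 0), x.
  split => //; split; [by left | by right | by case=> _ /(CB _ Cx)].
have gA' : good A'.
  split.
  - move=> [x y] c c' [Ac|[x1 [y1 [Nn E]]]] [Ac'|[x2 [y2 [Nn' E']]]].
    + exact: A1 Ac Ac'.
    + case: E' => ex ey _; subst x2 y2; have [Bx By _] := Acomp _ _ _ Ac.
      by exfalso; apply: notN Nn'.
    + case: E => ex ey _; subst x1 y1; have [Bx By _] := Acomp _ _ _ Ac'.
      by exfalso; apply: notN Nn.
    + by case: E => ex ey ->; case: E' => ex' ey' ->; subst.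
  - move=> [x y] [x' y'] c [Ac|[x1 [y1 [Nn E]]]] [Ac'|[x2 [y2 [Nn' E']]]].
    + exact: A2 Ac Ac'.
    + case: E' => ex ey ec; subst; have [_ _ Bc] := Acomp _ _ _ Ac.
      by exfalso; apply: CB (nwC _ _ Nn') Bc.
    + case: E => ex ey ec; subst; have [_ _ Bc] := Acomp _ _ _ Ac'.
      by exfalso; apply: CB (nwC _ _ Nn) Bc.
    + case: E => ex ey ec; case: E' => ex' ey' ec'; subst.
      by have [-> ->] := nwinj _ _ _ _ Nn Nn' ec'.
  - move=> [x y] c [Ac|[x1 [y1 [Nn E]]]].
    + by apply: (Dm_sub AA'); apply: A3 Ac.
    + by case: E => _ _ ->; apply: CDm; apply: nwC.
  - move=> x y /DmA'E Hx /DmA'E Hy.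
    have [[Bx By]|nB] := pselect (B x /\ B y).
      by have [c Ac] := A4 _ _ Bx By; exists c; left.
    by exists (nw x y); right; exists x, y.
apply: (Amax A').
  split => // /(_ ((e 0, h (e 0)), nw (e 0) (h (e 0)))) H.
  have Ch : C (h (e 0)) by exists (e 0).
  have : A (e 0, h (e 0), nw (e 0) (h (e 0))).
    apply: H; right; exists (e 0), (h (e 0)); split => //.
    by split; [left|right|case=> _ /(CB _ Ch)].
  by move=> /Acomp [_ /(CB _ Ch)].
by right; split => //; apply: subset_trans AA'.
Qed.
End Hess.

Fixpoint allin (T : Type) (A : set T) (s : seq T) : Prop :=
  if s is y :: s' then A y /\ allin A s' else True.

Lemma allin_map (T : Type) (J : eqType) (A : set T) (g : J -> T) (l : seq J) :
  allin A (map g l) <-> (forall j, j \in l -> A (g j)).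
Proof.
elim: l => [|j l IH] /=; first by split.
split.
  move=> [Ag /IH H] i; rewrite in_cons => /orP[/eqP ->//|]; exact: H.
move=> H; split; first by apply: H; rewrite mem_head.
by apply/IH => i il; apply: H; rewrite in_cons il orbT.
Qed.

Lemma maxel (T : Type) (S : seq (set T)) : S != [::] ->
  exists m, m \in S /\ forall j, j \in S -> m `<=` j -> j = m.
Proof.
elim: S => [//|x S IH] _.
have [->|SN] := eqVneq S [::].
  by exists x; split; [rewrite mem_head|move=> j; rewrite inE => /eqP ->].
have [m [mS mmax]] := IH SN.
have [mx|nmx] := pselect (m `<=` x).
  exists x; split; first by rewrite mem_head.
  move=> j; rewrite in_cons => /orP[/eqP ->//|jS] xj.
  have jm := mmax j jS (subset_trans mx xj).
  by apply/seteqP; split => //; rewrite jm.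
exists m; split; first by rewrite in_cons mS orbT.
move=> j; rewrite in_cons => /orP[/eqP ->//|jS]; exact: mmax.
Qed.

Import Order.TTheory GRing.Theory Num.Theory.
Unset Implicit Arguments.
Section MainSec.
Local Open Scope ring_scope.

Lemma main_aux (R : realType) (T : Type) (e : nat -> T) (einj : injective e) :
  exists b : set T -> T -> R, lin_indep b /\
    forall (s : seq (set T)) (c : set T -> R),
      lin_comb b s c = (fun _ => 0) \/
      (forall M : R, exists x : T, M < `|lin_comb b s c x|).
Proof.
have [pi piinj] := hess einj.
have sex : forall x : T, exists p : T * T, (exists q, pi q = x) -> pi p = x.
  move=> x; have [[q hq]|nq] := pselect (exists q, pi q = x); first by exists q.
  by exists (e 0, e 0).
have [sg sgP] := choice sex.
have sgK : forall p, sg (pi p) = p by move=> p; apply: piinj; apply: sgP; exists p.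
have dex : forall x : T, exists n : nat, (exists m, e m = x) -> e n = x.
  move=> x; have [[m hm]|nm] := pselect (exists m, e m = x); first by exists m.
  by exists 0%N.
have [d dP] := choice dex.
have dK : forall n, d (e n) = n by move=> n; apply: einj; apply: dP; exists n.
pose fix dec (k : nat) (x : T) {struct k} : seq T :=
  if k is k'.+1 then (sg x).1 :: dec k' (sg x).2 else [::].
have decS : forall L : seq T, exists x, dec (size L) x = L.
  elim=> [|y L [x hx]] /=; first by exists (e 0).
  by exists (pi (y, x)); rewrite sgK /= hx.
pose nn (x : T) : nat := d (sg (sg x).2).2.
pose LL (x : T) : seq T := dec (d (sg x).1) (sg (sg x).2).1.
have codeS : forall L n, exists x, nn x = n /\ LL x = L.
  move=> L n; have [xL hxL] := decS L.
  exists (pi (e (size L), pi (xL, e n))).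
  by rewrite /nn /LL !sgK /= !dK hxL.
pose ind (A : set T) (L : seq T) : R := (`[< allin A L >])%:R.
pose b (A : set T) (x : T) : R := (nn x)%:R * ind A (LL x).
pose Phi (s : seq (set T)) (c : set T -> R) (L : seq T) :=
  \sum_(j <- s) c j * ind j L.
have combE : forall s c x, lin_comb b s c x = (nn x)%:R * Phi s c (LL x).
  move=> s c x; rewrite /lin_comb /Phi big_distrr /=.
  by apply: eq_bigr => j _; rewrite /b mulrCA.
exists b; split.
  move=> s c us H j js; apply: contrapT => cj.
  have Phi0 : forall L, Phi s c L = 0.
    move=> L; have [x [nx Lx]] := codeS L 1%N.
    have := congr1 (fun g => g x) H; rewrite /= combE nx Lx mul1r; by [].
  pose S := [seq i <- s | c i != 0].
  have SN : S != [::].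
    apply/eqP => S0; have : j \in S by rewrite mem_filter js andbT; apply/eqP.
    by rewrite S0.
  have [m [mS mmax]] := maxel SN.
  have pex : forall i : set T, exists y, i \in S -> i != m -> m y /\ ~ i y.
    move=> i; have [[iS im]|nn'] := pselect (i \in S /\ i != m); last first.
      by exists (e 0) => iS im; exfalso; apply: nn'.
    apply: contrapT => nex; move/eqP: im; apply; apply: mmax => // y my.
    apply: contrapT => niy; apply: nex; exists y => _ _; by split.
  have [pk pkP] := choice pex.
  pose L := map pk [seq i <- S | i != m].
  have msub : m \in s by move: mS; rewrite mem_filter => /andP[].
  have cm : c m != 0 by move: mS; rewrite mem_filter => /andP[].
  have := Phi0 L; rewrite /Phi (bigD1_seq m) //=.
  have -> : ind m L = 1.
    have Lm : allin m L.
      apply/(allin_map m pk) => i; rewrite mem_filter => /andP[im iS].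
      by have [] := pkP i iS im.
    by rewrite /ind asboolT.
  rewrite big1_seq ?addr0 ?mulr1; first by move/eqP; rewrite (negbTE cm).
  move=> i /andP[im iin]; have [ci0|ci] := eqVneq (c i) 0; first by rewrite ci0 mul0r.
  have iS : i \in S by rewrite mem_filter ci.
  rewrite /ind; case: asboolP => [/(allin_map i pk) Hi|]; last by rewrite mulr0.
  have [_ nip] := pkP i iS im.
  by exfalso; apply: nip; apply: Hi; rewrite mem_filter im iS.
move=> s c.
have [P0|] := pselect (forall L, Phi s c L = 0).
  by left; apply: funext => x; rewrite combE P0 mulr0.
move=> /existsNP [L PL]; right => M.
have PL0 : 0 < `|Phi s c L| by rewrite normr_gt0; apply/eqP.
pose n := Num.bound (`|M| / `|Phi s c L|).
have [x [nx Lx]] := codeS L n.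
exists x; rewrite combE nx Lx normrM normr_nat.
apply: (le_lt_trans (ler_norm M)).
rewrite -ltr_pdivrMr //.
by apply: archi_boundP; apply: divr_ge0.
Qed.
End MainSec.

Theorem lemma3p2 (R : realType) (I : set R) (hI : ~ countable I) :
  @lineable R (@elt_of R I) (@NBF R I) (set (@elt_of R I)).
Proof.
have infI : infinite_set I by move=> /finite_set_countable.
have h1 := (infiniteP I).1 infI.
have [g gfun ginj] := injfunPex.1 (elimT card_leP h1).
have nT : forall n : nat, n \in [set: nat] by move=> n; apply: in_setT.
pose e (n : nat) : elt_of I :=
  exist _ (val (g (SigSub (nT n)))) (set_mem (valP (g (SigSub (nT n))))).
have einj : injective e.
  move=> m n Emn.
  have E1 : proj1_sig (e m) = proj1_sig (e n) by rewrite Emn.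
  have E : g (SigSub (nT m)) = g (SigSub (nT n)) by apply: val_inj.
  have := ginj _ _ (in_setT _) (in_setT _) E.
  by move=> E2; have := congr1 val E2.
have [b [bi bP]] := @main_aux R (elt_of I) e einj.
exists b; split; first exact: bi.
move=> s c; have [H|H] := bP s c; [by left | by right].
Qed.
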